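(* Assume the standing setup below. Let $\theta\in\mathbb{R}^{|\mathcal{V}|}$ with $\theta_i\ge0$ for all $i$, let $\mathbf{x}\in\mathcal{S}_\rho$, and let $(i,j)\in\mathcal{A}$ satisfy $u_i(\theta_i)\ge u_j(0)$. If $\mathbf{x}_i\in[0,\theta_i]$, then $\delta_{ij}(\mathbf{x})=0$ both for SSD and for NBRD. If moreover $\mathbf{z}^*_i(\mathbf{x})\in[0,\theta_i]$, where $\mathbf{z}^*(\mathbf{x})$ is the (unique) $\mathbf{z}$-part of any optimizer of $\mathbf{P}_3$, then $\mathbf{d}^*_{ij}=0$ for every optimizer $(\mathbf{z}^*,\mathbf{d}^* )$ of $\mathbf{P}_3$ (i.e. $\delta_{ij}(\mathbf{x})=0$ for NRPM as well).
   Context: Standing setup: $\mathcal{G}=(\mathcal{V},\mathcal{E})$ is a finite, connected, undirected graph; $\mathcal{N}^i$ is the neighbour set of $i$ and $\overline{\mathcal{N}}^i=\mathcal{N}^i\cup\{i\}$; $\mathcal{A}=\bigcup_{\{i,j\}\in\mathcal{E}}\{(i,j),(j,i)\}$ is the associated arc set. For $\rho\ge0$, $\mathcal{S}_\rho=\{\mathbf{x}\ge0:\sum_i\mathbf{x}_i=\rho\}$. For each node $i$, $p_i:[0,\infty)\to\mathbb{R}$ is twice continuously differentiable and strictly concave, and $u_i:=p_i'$ (right derivative at $0$), strictly decreasing. $U(\mathbf{x})=\sum_i[p_i(\mathbf{x}_i)-p_i(0)]$. All three dynamics have the form $\dot{\mathbf{x}}_i=\sum_{j\in\mathcal{N}^i}(\delta_{ji}(\mathbf{x})-\delta_{ij}(\mathbf{x}))$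 with flows $\delta_{ij}\ge0$ on arcs $(i,j)\in\mathcal{A}$. SSD (stratified Smith dynamics): $\delta_{ij}=\max\{u_j(\mathbf{x}_j)(\mathbf{x}_i-y_{ij})-(p_i(\mathbf{x}_i)-p_i(y_{ij})),0\}$, where $y_{ij}=0$ if $u_j(\mathbf{x}_j)\ge u_i(0)$, $y_{ij}=\mathbf{x}_i$ if $u_j(\mathbf{x}_j)\le u_i(\mathbf{x}_i)$, and otherwise $y_{ij}$ is the unique $y\in(0,\mathbf{x}_i)$ with $u_i(y)=u_j(\mathbf{x}_j)$. NBRD (nodal best response dynamics): $\delta_{ij}=\mathbf{d}^*_{ij}$, where $\{\mathbf{d}^*_{ij}\}_{j\in\overline{\mathcal{N}}^i}$ is the optimizer of $\mathbf{P}_2^i$: maximize $\sum_{j\in\mathcal{N}^i}[p_j(\mathbf{x}_j+\mathbf{d}_{ij})-p_j(\mathbf{x}_j)]+[p_i(\mathbf{d}_{ii})-p_i(0)]$ subject to $\mathbf{d}_{ii}+\sum_{j\in\mathcal{N}^i}\mathbf{d}_{ij}=\mathbf{x}_i$, $\mathbf{d}_{ij}\ge0$ for $j\in\overline{\mathcal{N}}^i$. NRPM (network restricted payoff maximization): $\mathbf{P}_3$ is: maximize $U(\mathbf{z})$ over $(\mathbf{z},\mathbf{d})$ subject to $\mathbf{z}_i=\mathbf{x}_i+\sum_{j\in\overline{\mathcal{N}}^i}(\mathbf{d}_{ji}-\mathbf{d}_{ij})$ for all $i$, $\sum_{j\in\overline{\mathcal{N}}^i}\mathbf{d}_{ij}=\mathbf{x}_i$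 for all $i$, and $\mathbf{d}_{ij}\ge0$ for all $(i,j)\in\mathcal{A}\cup\{(i,i):i\in\mathcal{V}\}$. The $\mathbf{z}$-component $\mathbf{z}^*(\mathbf{x})$ of optimizers is unique, the NRPM dynamics is $\dot{\mathbf{x}}=\mathbf{z}^*(\mathbf{x})-\mathbf{x}$, and its arc flows are $\delta_{ij}=\mathbf{d}^*_{ij}$ for an optimizer $(\mathbf{z}^*,\mathbf{d}^* )$. *)

(* Defs.v *)
From HB Require Import structures.
From mathcomp Require Import all_boot all_order all_algebra.
From mathcomp Require Import all_classical all_reals all_analysis.
Set Implicit Arguments. Unset Strict Implicit. Unset Printing Implicit Defensive.
Import Order.TTheory GRing.Theory Num.Theory.
Import numFieldNormedType.Exports.
Local Open Scope classical_set_scope.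
Local Open Scope ring_scope.

Section Defs.
Variable R : realType.

(* A finite, connected, undirected (simple) graph given by a symmetric,
   irreflexive adjacency relation e on a finite node type V.  The arc set
   A consists of the ordered pairs (i,j) with e i j. *)
Definition graph_ok (V : finType) (e : rel V) : Prop :=
  symmetric e /\ irreflexive e /\ (forall i j : V, connect e i j).

Definition deriv_on_nonneg (f f' : R -> R) : Prop :=
  (forall x : R, 0 < x -> is_derive x 1 f (f' x)) /\
  ((fun h : R => h^-1 * (f h - f 0)) @ 0^'+ --> f' 0).

Definition C2_nonneg_with_deriv (p u : R -> R) : Prop :=
  deriv_on_nonneg p u /\
  exists u2 : R -> R, deriv_on_nonneg u u2 /\
                      {within [set x : R | 0 <= x], continuous u2}.

Definition strictly_concave_nonneg (p : R -> R) : Prop :=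
  forall x y t : R, 0 <= x -> 0 <= y -> x != y -> 0 < t < 1 ->
    t * p x + (1 - t) * p y < p (t * x + (1 - t) * y).

Definition strictly_decr_nonneg (u : R -> R) : Prop :=
  forall x y : R, 0 <= x -> x < y -> u y < u x.

Definition in_simplex (V : finType) (rho : R) (x : V -> R) : Prop :=
  (forall i, 0 <= x i) /\ \sum_(i : V) x i = rho.

Definition ssd_y (V : finType) (u : V -> R -> R) (x : V -> R) (i j : V) : R :=
  if u i 0 <= u j (x j) then 0
  else if u j (x j) <= u i (x i) then x i
  else xget 0 [set y : R | 0 < y < x i /\ u i y = u j (x j)].

Definition ssd_flow (V : finType) (p u : V -> R -> R) (x : V -> R) (i j : V) : R :=
  let y := ssd_y u x i j in
  Num.max (u j (x j) * (x i - y) - (p i (x i) - p i y)) 0.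

(* decision variable d : V -> R; only d j for j in the closed neighbourhood
   of i matter (d i plays the role of d_ii). *)
Definition P2_feasible (V : finType) (e : rel V) (x : V -> R) (i : V) (d : V -> R) : Prop :=
  (forall j, (e i j || (j == i)) -> 0 <= d j) /\
  d i + \sum_(j | e i j) d j = x i.

Definition P2_obj (V : finType) (e : rel V) (p : V -> R -> R) (x : V -> R) (i : V)
  (d : V -> R) : R :=
  \sum_(j | e i j) (p j (x j + d j) - p j (x j)) + (p i (d i) - p i 0).

Definition P2_optimizer (V : finType) (e : rel V) (p : V -> R -> R) (x : V -> R)
  (i : V) (d : V -> R) : Prop :=
  P2_feasible e x i d /\
  forall d' : V -> R, P2_feasible e x i d' -> P2_obj e p x i d' <= P2_obj e p x i d.

Definition Uobj (V : finType) (p : V -> R -> R) (z : V -> R) : R :=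
  \sum_(i : V) (p i (z i) - p i 0).

Definition P3_feasible (V : finType) (e : rel V) (x : V -> R)
  (z : V -> R) (d : V -> V -> R) : Prop :=
  (forall i, z i = x i + \sum_(j | e i j || (j == i)) (d j i - d i j)) /\
  (forall i, \sum_(j | e i j || (j == i)) d i j = x i) /\
  (forall i j, (e i j || (j == i)) -> 0 <= d i j).

Definition P3_optimizer (V : finType) (e : rel V) (p : V -> R -> R) (x : V -> R)
  (z : V -> R) (d : V -> V -> R) : Prop :=
  P3_feasible e x z d /\
  forall z' d', P3_feasible e x z' d' -> Uobj p z' <= Uobj p z.

End Defs.

(* Main.v *)
Require Import Defs.
From HB Require Import structures.
From mathcomp Require Import all_boot all_order all_algebra.
From mathcomp Require Import all_classical all_reals all_analysis.
From mathcomp Require Import ring lra.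
From mathcomp Require Import lra.
Import Order.TTheory GRing.Theory Num.Theory.
Import numFieldNormedType.Exports.
Set Implicit Arguments. Unset Strict Implicit.
Local Open Scope classical_set_scope.
Local Open Scope ring_scope.

Section Aux.
Variable R : realType.

Lemma conc_le (p : R -> R) : strictly_concave_nonneg p ->
  forall x y t : R, 0 <= x -> 0 <= y -> 0 <= t <= 1 ->
    t * p x + (1 - t) * p y <= p (t * x + (1 - t) * y).
Proof.
move=> hc x y t hx hy /andP[t0 t1].
have [->|xy] := eqVneq x y.
  by rewrite -mulrDl -mulrDl addrC subrK !mul1r.
rewrite le_eqVlt in t0; case/predU1P: t0 => [<-|t0].
  by rewrite !mul0r !subr0 !mul1r !add0r.
rewrite le_eqVlt in t1; case/predU1P: t1 => [->|t1].
  by rewrite subrr !mul0r !mul1r !addr0.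
by apply/ltW/hc => //; rewrite t0 t1.
Qed.

Lemma rd (p u : R -> R) : deriv_on_nonneg p u -> forall a, 0 <= a ->
  (fun h => h^-1 * (p (a + h) - p a)) @ 0^'+ --> u a.
Proof.
move=> [hd h0] a; rewrite le_eqVlt => /predU1P[<-|a0].
  by under eq_fun do rewrite add0r.
have [hder hval] := hd a a0.
have G : (fun h => h^-1 *: ((p \o shift a) (h *: 1) - p a)) @ 0^' --> u a.
  by rewrite -hval; exact: hder.
have sub : 0^'+ `=>` (0:R)^'.
  apply: within_subset => x /= hx; exact: lt0r_neq0.
have G3 := cvg_trans (cvg_app _ sub) G.
apply: cvg_trans G3.
apply: near_eq_cvg; near=> h.
rewrite /= -[h%:A]/(h * 1) mulr1 (addrC h a). by rewrite /GRing.scale /=.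
Unshelve. all: by end_near.
Qed.

Lemma ub (p u : R -> R) : strictly_concave_nonneg p -> deriv_on_nonneg p u ->
  forall a d, 0 <= a -> 0 < d -> p (a + d) - p a <= d * u a.
Proof.
move=> hc hd a d a0 d0; rewrite leNgt; apply/negP => hlt.
set s := (p (a + d) - p a) / d.
have us : u a < s by rewrite /s ltr_pdivlMr // mulrC.
have : \forall h \near 0^'+, [/\ 0 < h, h < d & h^-1 * (p (a + h) - p a) < s].
  near=> h; split.
  - by near: h; exact: nbhs_right_gt.
  - by near: h; exact: nbhs_right_lt.
  - by near: h; exact: (cvgr_lt _ (rd hd a0) _ us).
move=> /filter_ex [h [h0 hd' hs]].
have t0 : 0 <= h / d <= 1.
  by apply/andP; split; [rewrite divr_ge0 ?ltW | rewrite ler_pdivrMr // mul1r ltW].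
have := conc_le hc (addr_ge0 a0 (ltW d0)) a0 t0.
have -> : h / d * (a + d) + (1 - h / d) * a = a + h.
  by field; rewrite lt0r_neq0.
move=> hineq.
have key : h * s <= p (a + h) - p a.
  have -> : h * s = (h / d * p (a + d) + (1 - h / d) * p a) - p a.
    by rewrite /s; field; rewrite lt0r_neq0.
  by rewrite lerD2r.
move: hs; rewrite ltNge => /negP; apply.
by rewrite mulrC ler_pdivlMr // mulrC.
Unshelve. all: by end_near.
Qed.

Lemma decr_le (u : R -> R) : strictly_decr_nonneg u ->
  forall x y, 0 <= x -> x <= y -> u y <= u x.
Proof.
move=> hu x y x0; rewrite le_eqVlt => /predU1P[->//|xy].
exact/ltW/hu.
Qed.

Lemma core (pi ui pj uj : R -> R) :
  deriv_on_nonneg pi ui -> strictly_concave_nonneg pj -> deriv_on_nonneg pj uj ->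
  strictly_decr_nonneg uj ->
  forall a c eps, 0 <= a -> 0 < c -> 0 < eps -> uj 0 <= ui a ->
  exists h, [/\ 0 < h, h < eps, h < c &
    pj c - pj (c - h) < pi (a + h) - pi a].
Proof.
move=> hdi hcj hdj huj a c eps a0 c0 e0 hu.
set m := c / 2.
have m0 : 0 < m by rewrite /m divr_gt0.
have um : uj m < ui a by apply: lt_le_trans hu; exact: huj.
have : \forall h \near 0^'+, [/\ 0 < h, h < eps, h < m & uj m < h^-1 * (pi (a + h) - pi a)].
  near=> h; split.
  - by near: h; exact: nbhs_right_gt.
  - by near: h; exact: nbhs_right_lt.
  - by near: h; exact: nbhs_right_lt.
  - by near: h; exact: (cvgr_gt _ (rd hdi a0) _ um).
move=> /filter_ex [h [h0 he hm hs]].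
exists h; split => //.
  by apply: lt_trans hm _; rewrite /m; lra.
have ch0 : 0 <= c - h by rewrite /m in hm; lra.
have := ub hcj hdj ch0 h0; rewrite subrK => hub.
apply: (le_lt_trans hub).
apply: (@le_lt_trans _ _ (h * uj m)).
  rewrite ler_pM2l //; apply: decr_le => //; first exact: ltW.
  by rewrite /m in hm *; lra.
by rewrite mulrC -ltr_pdivlMr // mulrC.
Unshelve. all: by end_near.
Qed.

Lemma sum_eq1 (V : finType) (P : pred V) (a : V) :
  \sum_(l | P l) ((l == a)%:R : R) = (P a)%:R.
Proof.
case Pa: (P a).
  rewrite (bigD1 a) //= eqxx big1 ?addr0 // => k /andP[_ /negbTE ->] //.
rewrite big1 // => k Pk; have /negbTE -> : k != a.
  by apply/eqP => ka; rewrite ka Pa in Pk.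
by [].
Qed.
End Aux.
Unset Implicit Arguments. Set Strict Implicit.
Close Scope classical_set_scope.

Theorem mainTheorem5 (R : realType) (V : finType) (e : rel V)
  (p u : V -> R -> R) (rho : R) (theta x : V -> R) (i j : V) :
  graph_ok e ->
  (forall k, C2_nonneg_with_deriv (p k) (u k)) ->
  (forall k, strictly_concave_nonneg (p k)) ->
  (forall k, strictly_decr_nonneg (u k)) ->
  0 <= rho ->
  (forall k, 0 <= theta k) ->
  in_simplex rho x ->
  e i j ->
  u j 0 <= u i (theta i) ->
  0 <= x i <= theta i ->
  [/\ ssd_flow p u x i j = 0,
      (forall d : V -> R, P2_optimizer e p x i d -> d j = 0) &
      (forall (z : V -> R) (d : V -> V -> R), P3_optimizer e p x z d ->
         0 <= z i <= theta i -> d i j = 0)].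
Proof.
move=> [esym [eirr _]] hC hconc hdecr rho0 th0 [xnn xsum] eij hu /andP[xi0 xith].
have hd : forall k, deriv_on_nonneg (p k) (u k) by move=> k; case: (hC k).
have nij : i != j by apply/eqP => ij; rewrite ij eirr in eij.
have nji : j != i by rewrite eq_sym.
have eji : e j i by rewrite esym.
split.
-
  have h1 : u j (x j) <= u j 0 by apply: decr_le.
  have h2 : u i (theta i) <= u i (x i) by apply: decr_le.
  rewrite /ssd_flow /ssd_y; case: ifP => hA.
    have xi_0 : x i = 0.
      apply/eqP; rewrite eq_le xi0 andbT leNgt; apply/negP => xpos.
      have := hdecr i 0 (x i) (lexx 0) xpos; lra.
    by rewrite xi_0 !subrr mulr0 subrr maxxx.
  rewrite ifT; last by apply: le_trans h1 (le_trans hu h2).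
  by rewrite !subrr mulr0 subrr maxxx.
-
  move=> d [[dnn dsum] dopt].
  have dj0 : 0 <= d j by apply: dnn; rewrite eij.
  have di0 : 0 <= d i by apply: dnn; rewrite eqxx orbT.
  apply/eqP; rewrite eq_le dj0 andbT leNgt; apply/negP => djpos.
  have sum0 : 0 <= \sum_(k | e i k) d k.
    by apply: sumr_ge0 => k eik; apply: dnn; rewrite eik.
  have dith : d i <= theta i by lra.
  have hua : u j 0 <= u i (d i) by apply: le_trans hu _; apply: decr_le.
  have c0 : 0 < x j + d j by have := xnn j; lra.
  have [h [h0 he hc hineq]] := core (hd i) (hconc j) (hd j) (hdecr j) di0 c0 djpos hua.
  set d' := fun k => d k + h * ((k == i)%:R - (k == j)%:R).
  have d'i : d' i = d i + h by rewrite /d' eqxx (negbTE nij) /=; ring.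
  have d'j : d' j = d j - h by rewrite /d' eqxx (negbTE nji) /=; ring.
  have d'k : forall k, k != i -> k != j -> d' k = d k.
    by move=> k /negbTE ki /negbTE kj; rewrite /d' ki kj /=; ring.
  have feas : P2_feasible e x i d'.
    split.
      move=> k hk; case: (eqVneq k i) => [->|ki]; first by rewrite d'i; lra.
      case: (eqVneq k j) => [->|kj]; first by rewrite d'j; lra.
      by rewrite d'k //; apply: dnn.
    rewrite big_split /= -mulr_sumr sumrB !sum_eq1 eirr eij d'i /=.
    rewrite -dsum; ring.
  have := dopt d' feas.
  rewrite /P2_obj (bigD1 j eij) (bigD1 j eij) /= d'i d'j.
  rewrite (eq_bigr (fun k => p k (x k + d k) - p k (x k))); last first.
    move=> k /andP[eik kj]; rewrite d'k //.
    by apply/eqP => ki; rewrite ki eirr in eik.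
  rewrite [x j + (d j - h)]addrA; move: hineq; lra.
-
  move=> z d [[hz [hrow hnn]] opt] /andP[zi0 zith].
  have dij0 : 0 <= d i j by apply: hnn; rewrite eij.
  apply/eqP; rewrite eq_le dij0 andbT leNgt; apply/negP => dpos.
  have zjge : d i j <= z j.
    have -> : z j = \sum_(l | e j l || (l == j)) d l j.
      by rewrite hz sumrB hrow; ring.
    rewrite (bigD1 i) /=; last by rewrite eji.
    rewrite lerDl; apply: sumr_ge0 => l /andP[hl _]; apply: hnn.
    by move: hl; rewrite orbC => /orP[/eqP->|hl]; rewrite ?eqxx ?orbT // esym hl.
  have zj0 : 0 < z j by lra.
  have hua : u j 0 <= u i (z i) by apply: le_trans hu _; apply: decr_le.
  have [h [h0 he hc hineq]] := core (hd i) (hconc j) (hd j) (hdecr j) zi0 zj0 dpos hua.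
  set c := fun k l : V => ((k == i)%:R * ((l == i)%:R - (l == j)%:R) : R).
  set d' := fun k l => d k l + h * c k l.
  set z' := fun k => x k + \sum_(l | e k l || (l == k)) (d' l k - d' k l).
  set D := fun k : V => ((e k i || (i == k))%:R * ((k == i)%:R - (k == j)%:R)
       - (k == i)%:R * ((e k i || (i == k))%:R - (e k j || (j == k))%:R) : R).
  have hz' : forall k, z' k = z k + h * D k.
    move=> k; rewrite /z' hz -addrA; congr (_ + _).
    have E : forall l, d' l k - d' k l = (d l k - d k l) + h * (c l k - c k l).
      by move=> l; rewrite /d'; ring.
    rewrite (eq_bigr _ (fun l _ => E l)) big_split /= -mulr_sumr; congr (_ + h * _).
    rewrite sumrB /c -mulr_suml sum_eq1 -mulr_sumr sumrB !sum_eq1 /D.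
    by [].
  have z'i : z' i = z i + h.
    by rewrite hz' /D eirr eqxx (negbTE nij) eij /=; ring.
  have z'j : z' j = z j - h.
    by rewrite hz' /D eji eqxx (negbTE nij) (negbTE nji) /=; ring.
  have z'k : forall k, k != i -> k != j -> z' k = z k.
    by move=> k /negbTE ki /negbTE kj; rewrite hz' /D ki kj /=; ring.
  have feas : P3_feasible e x z' d'.
    split; first by [].
    split.
      move=> k; rewrite /d' big_split /= -mulr_sumr hrow /c -mulr_sumr sumrB !sum_eq1.
      case: (eqVneq k i) => [->|ki]; last by rewrite /=; ring.
      by rewrite orbT eij /=; ring.
    move=> k l hkl; rewrite /d' /c /=.
    case: (eqVneq k i) => [ki|ki]; last by rewrite /= mul0r mulr0 addr0; apply: hnn.
    subst k.
    case: (eqVneq l i) => [li|li].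
      subst l; rewrite (negbTE nij) /=.
      have : 0 <= d i i by apply: hnn; rewrite eqxx orbT.
      lra.
    case: (eqVneq l j) => [lj|lj].
      subst l; rewrite /=; lra.
    rewrite /= subrr mulr0 mulr0 addr0; apply: hnn.
    by move: hkl; rewrite (negbTE li) orbF.
  have := opt z' d' feas.
  rewrite /Uobj (bigD1 i) // (bigD1 i (P := fun _ => true)) //=.
  rewrite (bigD1 j) // (bigD1 j (P := fun k => true && (k != i))) //=.
  rewrite z'i z'j.
  rewrite (eq_bigr (fun k => p k (z k) - p k 0)); last first.
    by move=> k /andP[ki kj]; rewrite z'k.
  move: hineq; rewrite -[z j - h]/(z j - h); lra.
Qed.
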